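(* Let $\mathcal{C}=\langle E,X\rangle$ be a stable configuration structure and $x^\dagger\in X$ a finite configuration. Define $\pi_{x^\dagger}:\mathsf{Pr}(\mathcal{C})\to\{-1,1\}$ by $\pi_{x^\dagger}(p)=-1$ if $p\subseteq x^\dagger$ and $\pi_{x^\dagger}(p)=1$ otherwise. Then $\mathsf{E}(\mathcal{C})[\pi_{x^\dagger}]$ is a polarized event structure.
   Context: A configuration structure is $\mathcal{C}=\langle E,X\rangle$ with $E$ countable and $X\subseteq\mathcal{P}(E)$. It is stable if: $\emptyset\in X$; for all nonempty $x\in X$ there is $a\in x$ with $x\setminus\{a\}\in X$; for all $x,y,z\in X$, $x\cup y\subseteq z$ implies $x\cup y\in X$; $X$ is closed under binary intersection; and for all $x,y,z\in X$, if each of $x\cup y$, $y\cup z$, $x\cup z$ is contained in some element of $X$ then $x\cup y\cup z\in X$. Two configurations $x,y$ are compatible ($x\frown_{\mathcal{C}}y$) if $\{x,y\}$ has a least upper bound in the poset $(X,\subseteq)$. In $(X,\subseteq)$, a set $Y\subseteq X$ is pairwise consistent if $Y\neq\emptyset$ and every two distinct elements of $Y$ have a least upper bound in $(X,\subseteq)$; an element $p\in X$ is a complete prime if for every pairwise consistent $Y$ whose least upper bound $\bigsqcup Y$ exists in $(X,\subseteq)$ and satisfies $p\subseteq\bigsqcup Y$, there is $y\in Y$ with $p\subseteq y$. $\mathsf{Pr}(\mathcal{C})$ is the set of complete primes. A prime event structure is $\mathbb{E}=(E,<,\#)$ with $<$ a partial order (reflexive, antisymmetric, transitive), $\#$ an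 irreflexive symmetric relation, such that $e\#e'<e''$ implies $e\#e''$; its configurations $\mathit{Conf}(\mathbb{E})$ are the subsets of $E$ that are conflict-free and downward closed for $<$. Winskel's construction: $\mathsf{E}(\mathcal{C}):=(\mathsf{Pr}(\mathcal{C}),<,\#)$ with $p<q$ iff $p\subseteq q$ and $p\#q$ iff not $p\frown_{\mathcal{C}}q$ (this is a prime event structure). A polarized event structure $\mathbb{E}[\pi]$ is a prime event structure $\mathbb{E}=(E,<,\#)$ with a map $\pi:E\to\{-1,1\}$ such that $\{e\in E\mid\pi(e)<0\}\in\mathit{Conf}(\mathbb{E})$. *)

(* Defs.v *)
From mathcomp Require Import all_boot all_algebra.
From mathcomp Require Import boolp classical_sets cardinality.
Set Implicit Arguments. Unset Strict Implicit. Unset Printing Implicit Defensive.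
Import GRing.Theory Num.Theory.
Local Open Scope classical_set_scope.
Local Open Scope ring_scope.

Section ConfStruct.
Variable E : countType.
Variable X : set (set E).

Definition stable : Prop :=
  [/\ X set0,
      (forall x, X x -> x !=set0 -> exists2 a, x a & X (x `\ a)),
      (forall x y z, X x -> X y -> X z -> x `|` y `<=` z -> X (x `|` y)),
      (forall x y, X x -> X y -> X (x `&` y)) &
      (forall x y z, X x -> X y -> X z ->
         (exists2 w, X w & x `|` y `<=` w) ->
         (exists2 w, X w & y `|` z `<=` w) ->
         (exists2 w, X w & x `|` z `<=` w) -> X (x `|` y `|` z))].

Definition is_lub (Y : set (set E)) (z : set E) : Prop :=
  [/\ X z, (forall y, Y y -> y `<=` z) &
      (forall w, X w -> (forall y, Y y -> y `<=` w) -> z `<=` w)].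

Definition compatible (x y : set E) : Prop := exists z, is_lub [set x; y] z.

Definition pairwise_consistent (Y : set (set E)) : Prop :=
  [/\ Y `<=` X, Y !=set0 &
      (forall x y, Y x -> Y y -> x <> y -> compatible x y)].

Definition complete_prime (p : set E) : Prop :=
  X p /\
  forall Y, pairwise_consistent Y ->
    forall z, is_lub Y z -> p `<=` z -> exists2 y, Y y & p `<=` y.

Definition Pr : set (set E) := complete_prime.

(* Winskel's E(C): events Pr(C), order ⊆, conflict = incompatibility *)
Definition EC_le (p q : set E) : Prop := p `<=` q.
Definition EC_conf (p q : set E) : Prop := ~ compatible p q.

End ConfStruct.

Definition prime_event_structure (T : Type) (D : set T)
    (le cf : T -> T -> Prop) : Prop :=
  [/\ (forall e, D e -> le e e),
      (forall e e', D e -> D e' -> le e e' -> le e' e -> e = e'),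
      (forall e e' e'', D e -> D e' -> D e'' -> le e e' -> le e' e'' -> le e e'') &
   [/\ (forall e, D e -> ~ cf e e),
      (forall e e', D e -> D e' -> cf e e' -> cf e' e) &
      (forall e e' e'', D e -> D e' -> D e'' -> cf e e' -> le e' e'' -> cf e e'')]].

Definition Conf (T : Type) (D : set T) (le cf : T -> T -> Prop) : set (set T) :=
  [set c | [/\ c `<=` D,
               (forall e e', c e -> c e' -> ~ cf e e') &
               (forall e e', c e -> D e' -> le e' e -> c e')]].

Definition polarized_event_structure (T : Type) (D : set T)
    (le cf : T -> T -> Prop) (pi : T -> int) : Prop :=
  [/\ prime_event_structure D le cf,
      (forall e, D e -> pi e = -1 \/ pi e = 1) &
      Conf D le cf [set e | D e /\ pi e < 0]].

Definition pol_of (E : Type) (xd : set E) (p : set E) : int :=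
  if `[< p `<=` xd >] then -1 else 1.

(* Main.v *)
Require Import Defs.
From mathcomp Require Import all_boot all_algebra.
From mathcomp Require Import boolp classical_sets cardinality.
Local Open Scope classical_set_scope.

Lemma union_compat {E : countType} {X : set (set E)} {x y z} :
  stable X -> X x -> X y -> X z -> x `|` y `<=` z -> compatible X x y.
Proof.
case=> _ _ H3 _ _ Xx Xy Xz sub.
exists (x `|` y); split.
- exact: H3 Xx Xy Xz sub.
- by move=> w [->|->] a Ha; [left|right].
- by move=> w _ Hw a [Ha|Ha]; [apply: (Hw x) | apply: (Hw y)] => //; [left|right].
Qed.

Lemma pol_neg (E : Type) (xd p : set E) : (pol_of xd p < 0)%R <-> p `<=` xd.
Proof.
rewrite /pol_of; case: asboolP => H; split => //.
Qed.

Theorem mainTheorem6 (E : countType) (X : set (set E)) (xd : set E) :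
  stable X -> X xd -> finite_set xd ->
  polarized_event_structure (Pr X) (@EC_le E) (EC_conf X) (pol_of xd).
Proof.
move=> st Xxd _.
have XP : forall p, Pr X p -> X p by move=> p [].
split.
- split.
  + by move=> e _; rewrite /EC_le.
  + by move=> e e' _ _ h1 h2; rewrite eqEsubset.
  + by move=> e e' e'' _ _ _ h1 h2; rewrite /EC_le => a /h1 /h2.
  split.
  + move=> e De H; apply: H; apply: (union_compat st (XP _ De) (XP _ De) (XP _ De)).
    by move=> a [].
  + move=> e e' De De' Hc [z [Xz Hub _]]; apply: Hc.
    apply: (union_compat st (XP _ De) (XP _ De') Xz) => a [Ha|Ha].
    * by apply: (Hub e) => //; right.
    * by apply: (Hub e') => //; left.
  + move=> e e' e'' De De' De'' Hc Hle [z [Xz Hub _]]; apply: Hc.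
    apply: (union_compat st (XP _ De) (XP _ De') Xz) => a [Ha|Ha].
    * by apply: (Hub e) => //; left.
    * by apply: (Hub e'') => //; [right | apply: Hle].
- by move=> e _; rewrite /pol_of; case: asboolP; [left|right].
- split.
  + by move=> e [].
  + move=> e e' [De /pol_neg He] [De' /pol_neg He'] H; apply: H; apply: (union_compat st (XP _ De) (XP _ De') Xxd).
    by move=> a [/He|/He'].
  + move=> e e' [De /pol_neg He] De' Hle; split => //; apply/pol_neg.
    by move=> a /Hle /He.
Qed.
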